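(* Let $g\in\mathbb{F}_q[t]$ be a composite polynomial. Then $g$ is a Carmichael polynomial if and only if (1) $g$ is square-free, and (2) $\deg P$ divides $\deg g$ for every irreducible factor $P$ of $g$.
   Context: $\mathbb{F}_q$ is the finite field with $q$ elements. A composite polynomial is a nonzero, non-constant polynomial that is not irreducible. A finite ring $S$ is a Carmichael ring if $S$ is not a field and $a^{|S|}=a$ for every $a\in S$. A polynomial $g\in\mathbb{F}_q[t]$ is a Carmichael polynomial if $\mathbb{F}_q[t]/(g)$ is a Carmichael ring. *)

(* Defs.v *)
From HB Require Import structures.
From mathcomp Require Import all_boot all_order all_algebra all_field.
Set Implicit Arguments. Unset Strict Implicit. Unset Printing Implicit Defensive.
Import GRing.Theory.
Local Open Scope ring_scope.

Definition carmichael_ring (S : finComUnitRingType) : Prop :=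
  ~ (forall a : S, a != 0 -> a \is a GRing.unit) /\
  (forall a : S, a ^+ #|S| = a).

(* Monic associate of g; the ideal (g) equals the ideal (monic_assoc g) for g != 0. *)
Definition monic_assoc (F : fieldType) (g : {poly F}) : {poly F} :=
  (lead_coef g)^-1 *: g.

(* g is Carmichael iff F[t]/(g) is a Carmichael ring.  MathComp's quotient
   ring {poly %/ h} is R[t]/(h) for monic h of size > 1. *)
Definition carmichael_poly (F : finFieldType) (g : {poly F}) : Prop :=
  carmichael_ring [the finComUnitRingType of {poly %/ monic_assoc g}].

Definition composite_poly (F : fieldType) (g : {poly F}) : Prop :=
  g != 0 /\ (1 < size g)%N /\ ~ irreducible_poly g.

Definition squarefree_poly (F : fieldType) (g : {poly F}) : Prop :=
  forall p : {poly F}, p ^+ 2 %| g -> (size p <= 1)%N.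

(* Main.v *)
Require Import Defs.
From HB Require Import structures.
From mathcomp Require Import all_boot all_order all_algebra all_field.
Set Implicit Arguments. Unset Strict Implicit. Unset Printing Implicit Defensive.
From Stdlib Require Import Classical.
Import GRing.Theory.
Local Open Scope ring_scope.

Lemma mk_monic_id (F : fieldType) (h : {poly F}) :
  (1 < size h)%N -> h \is monic -> mk_monic h = h.
Proof. by move=> hs hm; rewrite /mk_monic hs hm. Qed.

Lemma in_qpoly_eq0 (F : fieldType) (h f : {poly F}) :
  (1 < size h)%N -> h \is monic -> (in_qpoly h f == 0) = (h %| f).
Proof.
move=> hs hm; have E := mk_monic_id hs hm.
apply/eqP/idP => [/val_eqP /= | hDp].
  by rewrite -Pdiv.IdomainMonic.modpE E.
by apply/val_eqP; rewrite /= -Pdiv.IdomainMonic.modpE E.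
Qed.

Lemma in_qpolyK (F : fieldType) (h : {poly F}) (a : {poly %/ h}) :
  in_qpoly h (a : {poly F}) = a.
Proof. by apply: val_inj => /=; apply: Pdiv.Ring.rmodp_small; apply: size_mk_monic. Qed.

Lemma nontriv_div (F : fieldType) (u : {poly F}) :
  (1 < size u)%N -> ~ irreducible_poly u ->
  exists q : {poly F}, [/\ (1 < size q)%N, (size q < size u)%N & q %| u].
Proof.
move=> su nirr.
have u0 : u != 0 by rewrite -size_poly_gt0 (ltn_trans _ su).
have : ~ (forall q : {poly F}, size q != 1%N -> q %| u -> q %= u).
  by move=> H; apply: nirr; split.
move=> /not_all_ex_not [q Hq].
exists q.
have [s1 | s1] := eqVneq (size q) 1%N; first by exfalso; apply: Hq; rewrite s1.
have [dq | dq] := boolP (q %| u); last by exfalso; apply: Hq => _ H; rewrite H in dq.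
have [eq | neq] := boolP (q %= u); first by exfalso; apply: Hq => _ _.
have q0 : q != 0 by apply: contraNneq u0 => q0; move: dq; rewrite q0 dvd0p.
have sq := dvdp_leq u0 dq.
split => //.
  by move: s1 q0; rewrite -size_poly_gt0; case: (size q) => [|[]].
by rewrite ltn_neqAle sq andbT (dvdp_size_eqp dq).
Qed.

Lemma exists_irr (F : fieldType) (u : {poly F}) :
  (1 < size u)%N -> exists P, irreducible_poly P /\ P %| u.
Proof.
elim: {u}(size u) {-2}u (leqnn (size u)) => [|k IH] u hk su.
  by move: hk; rewrite leqn0 => /eqP e; rewrite e in su.
have [irr | nirr] := classic (irreducible_poly u).
  by exists u; split => //; rewrite dvdpp.
have [q [sq1 squ dq]] := nontriv_div su nirr.
have [P [HP dP]] := IH q (leq_trans squ hk) sq1.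
by exists P; split => //; apply: dvdp_trans dP dq.
Qed.

Lemma sqfree_dvd (F : fieldType) (g D : {poly F}) :
  g != 0 -> squarefree_poly g ->
  (forall P, irreducible_poly P -> P %| g -> P %| D) ->
  forall u, u %| g -> u %| D.
Proof.
move=> g0 sqf HP u.
elim: {u}(size u) {-2}u (leqnn (size u)) => [|k IH] u hk ug.
  have u0 : u != 0 by apply/eqP => e; move: ug; rewrite e dvd0p (negPf g0).
  by move: hk; rewrite leqn0 size_poly_eq0 (negPf u0).
have u0 : u != 0 by apply/eqP => e; move: ug; rewrite e dvd0p (negPf g0).
have [su | su] := leqP (size u) 1.
  have s1 : size u == 1%N.
    by rewrite eqn_leq su /= size_poly_gt0.
  by rewrite size_poly_eq1 in s1; rewrite (eqp_dvdl _ s1) dvd1p.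
have [P [irrP dPu]] := exists_irr su.
have P0 : P != 0 by apply/eqP => e; move: dPu; rewrite e dvd0p (negPf u0).
set u' := u %/ P.
have uE : u = u' * P by rewrite divpK.
have u'0 : u' != 0 by apply/eqP => e; move: u0; rewrite uE e mul0r eqxx.
have sP : (1 < size P)%N by case: irrP.
have su' : (size u' < size u)%N.
  rewrite uE size_mul //.
  by move: sP; case: (size P) => [|[|m]] //= _; rewrite addnS /= addnS ltnS leq_addr.
have du'g : u' %| g by apply: dvdp_trans ug; rewrite uE dvdp_mulIl.
have du'D : u' %| D.
  apply: IH => //; first by rewrite -ltnS (leq_trans su' hk).
have cop : coprimep P u'.
  rewrite irreducible_poly_coprime //; apply/negP => dPu'.
  have : P ^+ 2 %| g.
    by apply: dvdp_trans ug; rewrite uE expr2 dvdp_mul.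
  by move/sqf; rewrite leqNgt sP.
rewrite uE mulrC Gauss_dvdp // du'D andbT.
by apply: HP => //; apply: dvdp_trans ug.
Qed.

Lemma expf_card_iter (K : finFieldType) (y : K) m : y ^+ (#|K| ^ m) = y.
Proof. by elim: m => [|m IH]; rewrite ?expr1 // expnS exprM expf_card IH. Qed.

Lemma frob_add (R : comNzRingType) (F : finFieldType) m :
  [pchar R] =i [pchar F] -> forall a b : R,
  (a + b) ^+ (#|F| ^ m) = a ^+ (#|F| ^ m) + b ^+ (#|F| ^ m).
Proof.
move=> E a b; apply: exprDn_pchar.
rewrite (eq_pnat _ E).
have [p pp pc] := finPcharP F.
rewrite (eq_pnat _ (pcharf_eq pc)).
rewrite (card_pprimeChar pc) -expnM pnatX pnat_id //.
Qed.

Lemma pow_horner (R : comNzRingType) (M : nat)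
  (hD : forall a b : R, (a + b) ^+ M = a ^+ M + b ^+ M) (M0 : (0 < M)%N)
  (p : {poly R}) (x : R) (hc : forall i, p`_i ^+ M = p`_i) :
  p.[x] ^+ M = p.[x ^+ M].
Proof.
rewrite !horner_coef.
rewrite (big_morph (fun a : R => a ^+ M) (id1 := 0) hD); last by rewrite expr0n; case: (M) M0.
by apply: eq_bigr => i _; rewrite exprMn hc -!exprM mulnC.
Qed.

Section QF.
Variables (F : finFieldType) (P : {poly F}) (hI : monic_irreducible_poly P).
Local Notation L := {poly %/ P with hI}.
Definition xL : L := in_qpoly P 'X.

Lemma L_all m : xL ^+ (#|F| ^ m) = xL -> forall y : L, y ^+ (#|F| ^ m) = y.
Proof.
move=> hx y.
have yE : y = (map_poly (qpolyC P) (y : {poly F})).[xL].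
  by rewrite /xL -in_qpoly_comp_horner comp_polyXr in_qpolyK.
rewrite yE pow_horner ?hx //.
- by apply: frob_add; apply: pchar_qpoly.
- by rewrite expn_gt0 (ltn_trans _ (finNzRing_gt1 F)).
- by move=> i; rewrite coef_map -rmorphXn expf_card_iter.
Qed.

Lemma L_conv n : ((size P).-1 %| n)%N -> forall y : L, y ^+ (#|F| ^ n) = y.
Proof.
move=> /dvdnP [k ->] y.
by rewrite mulnC expnM -(card_qfpoly hI) expf_card_iter.
Qed.

Lemma L_deg n : (forall y : L, y ^+ (#|F| ^ n) = y) -> ((size P).-1 %| n)%N.
Proof.
move=> H.
have sP : (1 < size P)%N by case: hI => -[].
set d := (size P).-1.
have d0 : (0 < d)%N by rewrite /d -ltnS prednK // ltnW.
have q1 : (1 < #|F|)%N by apply: finNzRing_gt1.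
set r := (n %% d)%N.
have Hr : forall y : L, y ^+ (#|F| ^ r) = y.
  move=> y; rewrite -{2}(H y) (divn_eq n d) expnD exprM (mulnC (n %/ d)%N) expnM.
  by rewrite -(card_qfpoly hI) expf_card_iter.
have [r0 | rpos] := posnP r.
  by rewrite /dvdn -/r r0.
have rd : (r < d)%N by rewrite ltn_mod.
pose Q : {poly L} := 'X^(#|F| ^ r) - 'X.
have qr1 : (1 < #|F| ^ r)%N by rewrite -(expn0 #|F|) ltn_exp2l.
have sQ : size Q = (#|F| ^ r).+1.
  rewrite /Q size_polyDl ?size_polyXn // size_polyN size_polyX.
  by rewrite ltnS.
have Q0 : Q != 0 by rewrite -size_poly_gt0 sQ.
have Hall : all (root Q) (enum L).
  by apply/allP => y _; rewrite /root /Q !hornerE Hr subrr.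
have := max_poly_roots Q0 Hall (enum_uniq L).
rewrite sQ ltnS -cardE (card_qfpoly hI) -/d leq_exp2l // => hdr.
by move: (leq_ltn_trans hdr rd); rewrite ltnn.
Qed.
End QF.

Lemma P_dvd_all (F : finFieldType) (P : {poly F}) (hI : monic_irreducible_poly P) n :
  ((size P).-1 %| n)%N -> forall f : {poly F}, P %| f ^+ (#|F| ^ n) - f.
Proof.
move=> H f.
have sP : (1 < size P)%N by case: hI => -[].
rewrite -in_qpoly_eq0 //; last by case: hI.
rewrite rmorphB rmorphXn /=.
by rewrite (L_conv H (in_qpoly P f : {poly %/ P with hI})) subrr.
Qed.

Lemma P_dvd_X (F : finFieldType) (P : {poly F}) (hI : monic_irreducible_poly P) n :
  P %| 'X^(#|F| ^ n) - 'X -> ((size P).-1 %| n)%N.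
Proof.
move=> H.
have sP : (1 < size P)%N by case: hI => -[].
move: H; rewrite -in_qpoly_eq0 //; last by case: hI.
rewrite rmorphB rmorphXn /= subr_eq0 => /eqP hx.
apply: (L_deg (hI := hI)); apply: (L_all (hI := hI)).
exact: hx.
Qed.

Lemma irr_scale (F : fieldType) (P : {poly F}) c :
  c != 0 -> irreducible_poly P -> irreducible_poly (c *: P).
Proof.
move=> c0 [sP H]; split; first by rewrite size_scale.
move=> q sq; rewrite dvdpZr // => dq.
apply: eqp_trans (H q sq dq) _; by rewrite eqp_sym eqp_scale.
Qed.

Lemma monic_assoc_facts (F : fieldType) (P : {poly F}) : P != 0 ->
  [/\ monic_assoc P %= P, size (monic_assoc P) = size P,
      monic_assoc P \is monic & (lead_coef P)^-1 != 0].
Proof.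
move=> P0.
have c0 : (lead_coef P)^-1 != 0 by rewrite invr_eq0 lead_coef_eq0.
split => //; first exact: eqp_scale.
  by rewrite size_scale.
by rewrite monicE lead_coefZ mulVf ?lead_coef_eq0.
Qed.

Lemma monic_assoc_irr (F : fieldType) (P : {poly F}) :
  irreducible_poly P -> monic_irreducible_poly (monic_assoc P).
Proof.
move=> irrP.
have P0 : P != 0 by rewrite -size_poly_gt0; case: irrP => /ltnW.
have [_ _ m c0] := monic_assoc_facts P0.
by split => //; apply: irr_scale.
Qed.

Theorem theorem4p1 (F : finFieldType) (g : {poly F}) :
  composite_poly g ->
  (carmichael_poly g <->
     squarefree_poly g /\
     (forall P : {poly F}, irreducible_poly P -> P %| g ->
        ((size P).-1 %| (size g).-1)%N)).
Proof.
move=> [g0 [sg nirr]].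
have [hg sh hm c0] := monic_assoc_facts g0.
set h := monic_assoc g in hg sh hm *.
have sh1 : (1 < size h)%N by rewrite sh.
have E := mk_monic_id sh1 hm.
set N := (#|F| ^ (size g).-1)%N.
have cardQ : #|{poly %/ h}| = N by rewrite card_monic_qpoly // sh.
have N2 : (1 < N)%N.
  rewrite /N -(expn0 #|F|) ltn_exp2l ?finNzRing_gt1 //.
  by rewrite -ltnS prednK // ltnW.
have KE : (forall a : {poly %/ h}, a ^+ N = a) <-> (forall f, g %| f ^+ N - f).
  split => H f.
    by rewrite -(eqp_dvdl _ hg) -in_qpoly_eq0 // rmorphB rmorphXn /= H subrr.
  apply/eqP; rewrite -subr_eq0 -(in_qpolyK f) -rmorphXn -rmorphB.
  by rewrite in_qpoly_eq0 // (eqp_dvdl _ hg) H.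
have NF : ~ (forall a : {poly %/ h}, a != 0 -> a \is a GRing.unit).
  move=> H.
  have [q [sq1 sqg dq]] := nontriv_div sg nirr.
  have qs : (size q < size (mk_monic h))%N by rewrite E sh.
  pose a := in_qpoly h q.
  have aE : (a : {poly F}) = q := in_qpoly_small qs.
  have a0 : a != 0.
    by apply/eqP => e; move: sq1; rewrite -aE e size_poly0.
  have /unitrP [b [hb _]] := H a a0.
  have := qpoly_intro_unit hb; rewrite aE E => cop.
  have : coprimep q q.
    rewrite coprimep_sym in cop.
    by apply: coprimep_dvdl cop; rewrite (eqp_dvdr _ hg).
  by rewrite coprimepp; move: sq1; case: (size q) => [|[]].
rewrite /carmichael_poly /carmichael_ring cardQ.
have -> : (~ (forall a : {poly %/ h}, a != 0 -> a \is a GRing.unit) /\ (forall a : {poly %/ h}, a ^+ N = a)) <-> (forall a : {poly %/ h}, a ^+ N = a).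
  by split => [[]//|]; split.
rewrite KE; split => [H | [sqf deg] f].
  split.
    move=> p dp2; rewrite leqNgt; apply/negP => sp.
    have p0 : p != 0 by rewrite -size_poly_gt0 (ltn_trans _ sp).
    have [c hc] : exists c, g = c * p ^+ 2 by apply/dvdpP.
    pose a := c * p.
    have ga : g = a * p by rewrite hc /a expr2 mulrA.
    have ga2 : g %| a ^+ 2.
      have -> : a ^+ 2 = c * g by rewrite hc /a expr2 !mulrA; congr (_ * _); rewrite mulrAC.
      exact: dvdp_mulIr.
    have gaN : g %| a ^+ N.
      by apply: dvdp_trans ga2 _; apply: dvdp_exp2l.
    have := H a; rewrite (dvdp_subr _ gaN) => gda.
    have a0 : a != 0 by apply/eqP => e; move: g0; rewrite ga e mul0r eqxx.
    have := dvdp_leq a0 gda; rewrite ga size_mul //.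
    move: sp; case: (size p) => [|[|m]] //= _.
    by rewrite addnS /= addnS leqNgt ltnS leq_addr.
  move=> P irrP dPg.
  have P0 : P != 0 by rewrite -size_poly_gt0; case: irrP => /ltnW.
  have [hP sP' _ _] := monic_assoc_facts P0.
  have hI := monic_assoc_irr irrP.
  rewrite -sP'; apply: (P_dvd_X hI).
  rewrite (eqp_dvdl _ hP); exact: dvdp_trans dPg (H 'X).
apply: (sqfree_dvd g0 sqf); last exact: dvdpp.
move=> P irrP dPg.
have P0 : P != 0 by rewrite -size_poly_gt0; case: irrP => /ltnW.
have [hP sP' _ _] := monic_assoc_facts P0.
have hI := monic_assoc_irr irrP.
rewrite -(eqp_dvdl _ hP); apply: (P_dvd_all hI).
by rewrite sP'; apply: deg.
Qed.
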